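(* Every countable directed subset of an $\omega$-cpo has a supremum.
   Context: We work constructively, in higher-order intuitionistic logic with Dependent Choice (in particular Countable Choice). A chain in a poset $(P,\le)$ is a sequence $c:\mathbb{N}\to P$ with $c_i\le c_{i+1}$ for all $i$. An $\omega$-cpo is a poset in which every chain has a supremum. A subset $S\subseteq P$ is directed if it is inhabited and any two elements of $S$ have an upper bound in $S$. A set $S$ is countable if there is a surjection $\mathbb{N}\to1+S$. *)

(* Defs.v *)
Definition is_poset {T : Type} (le : T -> T -> Prop) : Prop :=
  (forall x, le x x) /\
  (forall x y z, le x y -> le y z -> le x z) /\
  (forall x y, le x y -> le y x -> x = y).

Definition is_sup {T : Type} (le : T -> T -> Prop) (S : T -> Prop) (s : T) : Prop :=
  (forall x, S x -> le x s) /\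
  (forall u, (forall x, S x -> le x u) -> le s u).

Definition is_chain {T : Type} (le : T -> T -> Prop) (c : nat -> T) : Prop :=
  forall i, le (c i) (c (S i)).

Definition omega_cpo {T : Type} (le : T -> T -> Prop) : Prop :=
  is_poset le /\
  forall c : nat -> T, is_chain le c -> exists s, is_sup le (fun x => exists i, c i = x) s.

Definition directed {T : Type} (le : T -> T -> Prop) (S : T -> Prop) : Prop :=
  (exists x, S x) /\
  (forall x y, S x -> S y -> exists z, S z /\ le x z /\ le y z).

(* countable: there is a surjection nat -> 1 + S  (1 + S rendered as option) *)
Definition countable {T : Type} (S : T -> Prop) : Prop :=
  exists f : nat -> option {x : T | S x},
    forall y : option {x : T | S x}, exists n, f n = y.

(* Main.v *)
Require Import Defs.
From Stdlib Require Import ClassicalEpsilon.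

Theorem lemma3p9 (T : Type) (le : T -> T -> Prop) (Hcpo : omega_cpo le)
  (D : T -> Prop) (Hcount : countable D) (Hdir : directed le D) :
  exists s : T, is_sup le D s.
Proof.
  destruct Hcpo as [[Hrefl [Htrans _]] Hch].
  destruct Hcount as [f Hf].
  destruct Hdir as [[d0 Hd0] Hub].
  set (g := fun n => match f n with Some x => x | None => exist D d0 Hd0 end).
  assert (ub : forall x y : {x | D x}, {z : {z | D z} |
      le (proj1_sig x) (proj1_sig z) /\ le (proj1_sig y) (proj1_sig z)}).
  { intros [x Hx] [y Hy]. apply constructive_indefinite_description.
    destruct (Hub x y Hx Hy) as [z [Hz [H1 H2]]].
    exists (exist D z Hz). simpl. auto. }
  set (c := fix c n := match n with
                       | O => g O
                       | S m => proj1_sig (ub (c m) (g (S m))) end).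
  assert (Hc : is_chain le (fun n => proj1_sig (c n))).
  { intro i. simpl. destruct (ub (c i) (g (S i))) as [z [H1 H2]]. exact H1. }
  assert (Hg : forall n, le (proj1_sig (g n)) (proj1_sig (c n))).
  { intros [|n]. apply Hrefl. simpl. destruct (ub (c n) (g (S n))) as [z [H1 H2]]. exact H2. }
  destruct (Hch _ Hc) as [s [Hs1 Hs2]].
  exists s. split.
  - intros x Hx. destruct (Hf (Some (exist D x Hx))) as [n Hn].
    assert (E : g n = exist D x Hx) by (unfold g; rewrite Hn; reflexivity).
    apply Htrans with (proj1_sig (c n)).
    + change x with (proj1_sig (exist D x Hx)). rewrite <- E. apply Hg.
    + apply Hs1. exists n. reflexivity.
  - intros u Hu. apply Hs2. intros x [i <-]. apply Hu. exact (proj2_sig (c i)).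
Qed.
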